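(* For every triple $(r,s,t)$ of nonnegative integers with $r+s+t=d$ and $r\ge s\ge t$, there exists a nonzero vector $\mathbf v\in E^*_{[s,t]}V$ with $L_1\mathbf v=L_2\mathbf v=\mathbf 0$. Conversely, if $\mathbf v\in E^*_{[s,t]}V$ is nonzero with $L_1\mathbf v=L_2\mathbf v=\mathbf 0$, then $r=d-s-t\ge s\ge t$.
   Context: Let $d\ge1$, $\mathbb F_3=\{0,1,2\}$, $X=\mathbb F_3^d$, $V=\mathbb C^X$ with standard basis $\{\hat y:y\in X\}$. $E^*_{[s,t]}$ is the diagonal projection onto the span of those $\hat y$ with $y$ having exactly $s$ coordinates equal to $1$ and $t$ equal to $2$. Define linear operators on $V$: $L_1\hat y$ is the sum of $\hat z$ over all $z$ obtained from $y$ by changing exactly one coordinate equal to $1$ into $0$ (empty sum $=0$), and $L_2$ similarly changes one coordinate $2\mapsto1$. *)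

(* Defs.v *)
From mathcomp Require Import all_boot all_order all_algebra all_field.
Set Implicit Arguments. Unset Strict Implicit. Unset Printing Implicit Defensive.
Import GRing.Theory Num.Theory.
Local Open Scope ring_scope.

(* X = F_3^d : functions from coordinates 'I_d to F_3 = {0,1,2} = 'I_3 *)
Definition X (d : nat) := {ffun 'I_d -> 'I_3}.

(* V = C^X : vectors indexed by X; v y is the coefficient of the basis vector y^ *)
Definition V (d : nat) := {ffun X d -> algC}.

Definition ncoord (d : nat) (k : nat) (y : X d) : nat :=
  #|[set i : 'I_d | nat_of_ord (y i) == k]|.

Definition upd (d : nat) (y : X d) (i : 'I_d) (a : 'I_3) : X d :=
  [ffun j => if j == i then a else y j].

Definition Estar (d s t : nat) (v : V d) : V d :=
  [ffun y => if (ncoord 1 y == s) && (ncoord 2 y == t) then v y else 0].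

Definition inEstarV (d s t : nat) (v : V d) : Prop := Estar s t v = v.

(* Lowering operator changing one coordinate equal to a into b:
   L y^ = sum over i with y i = a of (upd y i b)^ , extended linearly. *)
Definition Lop (d : nat) (a b : 'I_3) (v : V d) : V d :=
  [ffun z => \sum_(y : X d) \sum_(i : 'I_d | (y i == a) && (z == upd y i b)) v y].

Definition L1 (d : nat) (v : V d) : V d := Lop (inord 1) (inord 0) v.
Definition L2 (d : nat) (v : V d) : V d := Lop (inord 2) (inord 1) v.

(* Main.v *)
Require Import Defs.
From mathcomp Require Import all_boot all_order all_algebra all_field.
From mathcomp Require Import ring zify.
Import GRing.Theory Num.Theory.
Local Open Scope ring_scope.
Set Implicit Arguments. Unset Strict Implicit.

Section U.
Variable d : nat.
Implicit Types (y z : X d) (i j : 'I_d) (a b : 'I_3).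

Lemma updE y i a j : upd y i a j = if j == i then a else y j.
Proof. by rewrite ffunE. Qed.

Lemma upd_id y i : upd y i (y i) = y.
Proof. by apply/ffunP=> j; rewrite updE; case: eqP => // ->. Qed.

Lemma updK y i a b : upd (upd y i a) i b = upd y i b.
Proof. by apply/ffunP=> j; rewrite !updE; case: eqP. Qed.

Lemma upd_comm y i j a b : i != j -> upd (upd y i a) j b = upd (upd y j b) i a.
Proof.
move=> ij; apply/ffunP=> k; rewrite !updE.
case: (eqVneq k j) => [kj|]; case: (eqVneq k i) => // ki.
by move: ij; rewrite -ki kj eqxx.
Qed.

Lemma LopE a b (v : V d) z :
  Lop a b v z = \sum_(i | z i == b) v (upd z i a).
Proof.
rewrite ffunE; under eq_bigr do rewrite big_mkcond.
rewrite exchange_big /= [RHS]big_mkcond; apply: eq_bigr => i _.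
rewrite -big_mkcond /=.
rewrite (eq_bigl (fun y => (z i == b) && (y == upd z i a))); last first.
  move=> y /=; apply/idP/idP.
    move=> /andP [/eqP yi /eqP ->].
    by rewrite updE updK -yi upd_id !eqxx.
  move=> /andP [/eqP zi /eqP ->].
  by rewrite updE updK -zi upd_id !eqxx.
case: (z i == b) => /=; last by rewrite big_pred0.
by rewrite big_pred1_eq.
Qed.

Lemma ncoordE k y : ncoord k y = (\sum_i (nat_of_ord (y i) == k))%N.
Proof.
rewrite /ncoord -sum1dep_card big_mkcond /=; apply: eq_bigr => i _.
by case: eqP.
Qed.

End U.


Section C.
Variable d : nat.
Implicit Types (y z : X d) (i j : 'I_d) (a b : 'I_3).

Lemma sum_cnt (k : 'I_3) z (c : algC) :
  \sum_(i | z i == k) c = (ncoord k z)%:R * c.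
Proof.
rewrite ncoordE natr_sum mulr_suml big_mkcond /=; apply: eq_bigr => i _.
have -> : (nat_of_ord (z i) == k) = (z i == k) by [].
by case: (z i == k); rewrite ?mul1r ?mul0r.
Qed.

Lemma LLE a b (hab : a != b) (v : V d) z :
  Lop a b (Lop b a v) z = (ncoord b z)%:R * v z +
     \sum_(i | z i == b) \sum_(j | z j == a) v (upd (upd z i a) j b).
Proof.
rewrite LopE -sum_cnt -big_split /=; apply: eq_bigr => i /eqP zi.
rewrite LopE (bigD1 i) /=; last by rewrite updE eqxx.
rewrite updK -zi upd_id; congr (_ + _); apply: eq_bigl => j.
rewrite updE; case: (eqVneq j i) => [->|] //=.
  by rewrite andbF zi eq_sym (negbTE hab).
by rewrite andbT.
Qed.

Lemma comm_LR a b (hab : a != b) (v : V d) z :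
  Lop a b (Lop b a v) z + (ncoord a z)%:R * v z =
  Lop b a (Lop a b v) z + (ncoord b z)%:R * v z.
Proof.
rewrite LLE // LLE 1?eq_sym //.
rewrite addrAC [RHS]addrAC [RHS]addrC [LHS]addrC; congr (_ + _).
rewrite exchange_big /=; apply: eq_bigr => j /eqP zj; apply: eq_bigr => i /eqP zi.
rewrite upd_comm //; apply: contra_neq hab => ij.
by rewrite -zj -zi ij.
by rewrite addrC.
Qed.
End C.


Section D.
Variable d : nat.
Implicit Types (y z : X d) (i j : 'I_d) (a b : 'I_3).

Definition ip (u w : V d) : algC := \sum_z w z * (u z)^*.

Lemma adj a b (u w : V d) : ip u (Lop a b w) = ip (Lop b a u) w.
Proof.
rewrite /ip.
under eq_bigr do rewrite LopE mulr_suml big_mkcond /=.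
rewrite exchange_big /=.
under [RHS]eq_bigr do rewrite LopE rmorph_sum mulr_sumr big_mkcond /=.
rewrite [RHS]exchange_big /=; apply: eq_bigr => i _.
rewrite -!big_mkcond /=.
rewrite (reindex_onto (fun y => upd y i b) (fun z => upd z i a)) /=; last first.
  by move=> z /eqP zi; rewrite updK -zi upd_id.
apply: eq_big => y.
  rewrite updE !eqxx /= updK; apply/eqP/eqP => [<-|<-]; last by rewrite upd_id.
  by rewrite updE eqxx.
by move=> /andP [_ /eqP E]; rewrite E.
Qed.

Lemma ip_ge0 (u : V d) : 0 <= ip u u.
Proof. by apply: sumr_ge0 => z _; apply: mul_conjC_ge0. Qed.

Lemma ip_gt0 (u : V d) : u != 0 -> 0 < ip u u.
Proof.
move=> nz; have [z uz] : exists z, u z != 0.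
  apply/existsP; apply: contraR nz; rewrite negb_exists => /forallP H.
  by apply/eqP/ffunP => z; rewrite ffunE; apply/eqP; rewrite -[_ == _]negbK H.
rewrite /ip (bigD1 z) //=; apply: ltr_wpDr.
  by apply: sumr_ge0 => y _; apply: mul_conjC_ge0.
by rewrite mul_conjC_gt0.
Qed.

Lemma conv_part a b (hab : a != b) (v : V d) (na nb : nat) :
  (forall z, v z != 0 -> ncoord a z = na /\ ncoord b z = nb) ->
  v != 0 -> Lop a b v = 0 -> (na <= nb)%N.
Proof.
move=> supp nz hL.
have key : ip v (Lop a b (Lop b a v)) + na%:R * ip v v = nb%:R * ip v v.
  rewrite /ip mulr_sumr mulr_sumr -big_split /=; apply: eq_bigr => z _.
  have [->|vz] := eqVneq (v z) 0; first by rewrite rmorph0 !mulr0 addr0.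
  have [ea eb] := supp z vz.
  have := comm_LR hab v z; rewrite hL ea eb.
  have -> : Lop b a (0 : V d) z = 0 by rewrite LopE big1 // => i _; rewrite ffunE.
  rewrite add0r => E.
  by rewrite mulrA -mulrDl E mulrA.
have P0 := ip_gt0 nz.
have Q0 : 0 <= ip v (Lop a b (Lop b a v)) by rewrite adj ip_ge0.
rewrite -(ler_nat algC) -(ler_pM2r P0) -key lerDr //.
Qed.
End D.


Section T.
Variables d1 d2 : nat.

Definition lft (y : X (d1 + d2)) : X d1 := [ffun i => y (lshift d2 i)].
Definition rgt (y : X (d1 + d2)) : X d2 := [ffun j => y (rshift d1 j)].
Definition tens (v : V d1) (u : V d2) : V (d1 + d2) :=
  [ffun y => v (lft y) * u (rgt y)].
Definition xcat (y1 : X d1) (y2 : X d2) : X (d1 + d2) :=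
  [ffun i => match split i with inl j => y1 j | inr j => y2 j end].

Lemma lft_cat y1 y2 : lft (xcat y1 y2) = y1.
Proof. by apply/ffunP => i; rewrite !ffunE (unsplitK (inl _ i)). Qed.
Lemma rgt_cat y1 y2 : rgt (xcat y1 y2) = y2.
Proof. by apply/ffunP => i; rewrite !ffunE (unsplitK (inr _ i)). Qed.

Lemma lft_updl y i a : lft (upd y (lshift d2 i) a) = upd (lft y) i a.
Proof. by apply/ffunP => j; rewrite !ffunE eq_shift. Qed.
Lemma rgt_updl y i a : rgt (upd y (lshift d2 i) a) = rgt y.
Proof. by apply/ffunP => j; rewrite !ffunE eq_shift. Qed.
Lemma lft_updr y i a : lft (upd y (rshift d1 i) a) = lft y.
Proof. by apply/ffunP => j; rewrite !ffunE eq_shift. Qed.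
Lemma rgt_updr y i a : rgt (upd y (rshift d1 i) a) = upd (rgt y) i a.
Proof. by apply/ffunP => j; rewrite !ffunE eq_shift. Qed.

Lemma Lop_tens a b v u z :
  Lop a b (tens v u) z = Lop a b v (lft z) * u (rgt z) + v (lft z) * Lop a b u (rgt z).
Proof.
rewrite LopE big_split_ord /= !LopE mulr_suml mulr_sumr; congr (_ + _).
  apply: eq_big => [i|i _]; first by rewrite ffunE.
  by rewrite ffunE lft_updl rgt_updl.
apply: eq_big => [i|i _]; first by rewrite ffunE.
by rewrite ffunE lft_updr rgt_updr.
Qed.

Lemma ncoord_tens k z : ncoord k z = (ncoord k (lft z) + ncoord k (rgt z))%N.
Proof. by rewrite !ncoordE big_split_ord; congr (_ + _)%N; apply: eq_bigr => i _; rewrite ffunE. Qed.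

End T.


Definition hw (n s t : nat) (v : V n) :=
  [/\ v != 0, (forall z, v z != 0 -> ncoord 1 z = s /\ ncoord 2 z = t),
      L1 v = 0 & L2 v = 0].

Lemma exists_nz n (u : V n) : u != 0 -> exists z, u z != 0.
Proof.
move=> nz; apply/existsP; apply: contraR nz; rewrite negb_exists => /forallP H.
by apply/eqP/ffunP => z; rewrite ffunE; apply/eqP; rewrite -[_ == _]negbK H.
Qed.

Lemma tens_hw n1 n2 s1 t1 s2 t2 (v : V n1) (u : V n2) :
  hw s1 t1 v -> hw s2 t2 u -> hw (s1 + s2) (t1 + t2) (tens v u).
Proof.
move=> [nv sv l1v l2v] [nu su l1u l2u]; split.
- have [y1 h1] := exists_nz nv; have [y2 h2] := exists_nz nu.
  apply/eqP => E; move: (congr1 (fun f : V (n1 + n2) => f (xcat y1 y2)) E) => /=.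
  rewrite !ffunE lft_cat rgt_cat => /eqP.
  by rewrite mulf_eq0 (negbTE h1) (negbTE h2).
- move=> z; rewrite ffunE mulf_eq0 negb_or => /andP [h1 h2].
  have [e1 e2] := sv _ h1; have [e3 e4] := su _ h2.
  by rewrite !(ncoord_tens _ z) e1 e2 e3 e4.
- apply/ffunP => z; rewrite /L1 Lop_tens -/(L1 v) -/(L1 u) l1v l1u !ffunE.
  by rewrite mul0r mulr0 addr0.
- apply/ffunP => z; rewrite /L2 Lop_tens -/(L2 v) -/(L2 u) l2v l2u !ffunE.
  by rewrite mul0r mulr0 addr0.
Qed.


Lemma eq_inord (x : 'I_3) k : (k < 3)%N -> (x == inord k) = (nat_of_ord x == k).
Proof. by move=> hk; rewrite -val_eqE /= inordK. Qed.

Definition g1 (x0 : nat) : algC := match x0 with O => 1 | _ => 0 end.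
Definition g2 (x0 x1 : nat) : algC :=
  match x0, x1 with O, S O => 1 | S O, O => -1 | _, _ => 0 end.
Definition g3 (x0 x1 x2 : nat) : algC :=
  match x0, x1, x2 with
  | O, S O, S (S O) => 1 | S O, S (S O), O => 1 | S (S O), O, S O => 1
  | O, S (S O), S O => -1 | S (S O), S O, O => -1 | S O, O, S (S O) => -1
  | _, _, _ => 0 end.
Definition w1 : V 1 := [ffun y : X 1 => g1 (y ord0)].
Definition w2 : V 2 := [ffun y : X 2 => g2 (y ord0) (y (lift ord0 ord0))].
Definition w3 : V 3 := [ffun y : X 3 =>
  g3 (y ord0) (y (lift ord0 ord0)) (y (lift ord0 (lift ord0 ord0)))].

Ltac cs t := case: t => [[|[|[|?]]] ?] //=.
Ltac expand := rewrite ?LopE !ffunE ?big_mkcond /= !big_ord_recl !big_ord0 /= !ffunE /= !eq_inord // !inordK //.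
Ltac fin := try by rewrite ?addr0 ?add0r ?addNr ?subrr.

Lemma w1_hw : hw 0 0 w1.
Proof.
split.
- apply/eqP => E; move: (congr1 (fun f : V _ => f [ffun => inord 0]) E) => /=; rewrite !ffunE inordK //= => /eqP.
  by rewrite oner_eq0.
- move=> z; rewrite !ncoordE !big_ord_recl !big_ord0 !ffunE /=.
  by cs (z ord0); rewrite ?eqxx.
- apply/ffunP => z; rewrite /L1; expand; cs (z ord0); fin.
- apply/ffunP => z; rewrite /L2; expand; cs (z ord0); fin.
Qed.

Lemma w2_hw : hw 1 0 w2.
Proof.
split.
- apply/eqP => E; move: (congr1 (fun f : V _ => f [ffun i : 'I_2 => inord i]) E) => /=; rewrite !ffunE !inordK //= => /eqP.
  by rewrite oner_eq0.
- move=> z; rewrite !ncoordE !big_ord_recl !big_ord0 !ffunE /=.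
  by cs (z ord0); cs (z (lift ord0 ord0)); rewrite ?eqxx.
- apply/ffunP => z; rewrite /L1; expand; cs (z ord0); cs (z (lift ord0 ord0)); fin.
- apply/ffunP => z; rewrite /L2; expand; cs (z ord0); cs (z (lift ord0 ord0)); fin.
Qed.

Lemma w3_hw : hw 1 1 w3.
Proof.
split.
- apply/eqP => E; move: (congr1 (fun f : V _ => f [ffun i : 'I_3 => inord i]) E) => /=; rewrite !ffunE !inordK //= => /eqP.
  by rewrite oner_eq0.
- move=> z; rewrite !ncoordE !big_ord_recl !big_ord0 !ffunE /=.
  by cs (z ord0); cs (z (lift ord0 ord0)); cs (z (lift ord0 (lift ord0 ord0))); rewrite ?eqxx.
- apply/ffunP => z; rewrite /L1; expand; cs (z ord0); cs (z (lift ord0 ord0)); cs (z (lift ord0 (lift ord0 ord0))); fin.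
- apply/ffunP => z; rewrite /L2; expand; cs (z ord0); cs (z (lift ord0 ord0)); cs (z (lift ord0 (lift ord0 ord0))); fin.
Qed.


Definition w0 : V 0 := [ffun => 1].

Lemma w0_hw : hw 0 0 w0.
Proof.
split.
- apply/eqP => E; move: (congr1 (fun f : V _ => f [ffun => ord0]) E) => /=.
  by rewrite !ffunE => /eqP; rewrite oner_eq0.
- by move=> z _; rewrite !ncoordE !big_ord0.
- by apply/ffunP => z; rewrite /L1 LopE big_mkcond big_ord0 ffunE.
- by apply/ffunP => z; rewrite /L2 LopE big_mkcond big_ord0 ffunE.
Qed.

Lemma exist_hw n : forall r s t, (r + s + t)%N = n -> (t <= s)%N -> (s <= r)%N ->
  exists v : V n, hw s t v.
Proof.
elim/ltn_ind: n => n IH r s t hn ts sr.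
have [r0|rpos] := eqVneq r 0%N.
  have [-> ->] : (s = 0 /\ t = 0)%N by lia.
  have -> : n = 0%N by lia.
  by exists w0; apply: w0_hw.
have [lt_sr|e_sr] := ltnP s r.
  have [m hm] : exists m, n = (1 + m)%N by exists (n - 1)%N; lia.
  rewrite hm in IH hn *.
  have [v hv] := IH m ltac:(lia) (r - 1)%N s t ltac:(lia) ts ltac:(lia).
  exists (tens w1 v); have := tens_hw w1_hw hv; by rewrite !add0n.
have [lt_ts|e_ts] := ltnP t s.
  have [m hm] : exists m, n = (2 + m)%N by exists (n - 2)%N; lia.
  rewrite hm in IH hn *.
  have [v hv] := IH m ltac:(lia) (r - 1)%N (s - 1)%N t ltac:(lia) ltac:(lia) ltac:(lia).
  exists (tens w2 v); have := tens_hw w2_hw hv.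
  by rewrite add0n (_ : (1 + (s - 1) = s)%N) //; lia.
have [m hm] : exists m, n = (3 + m)%N by exists (n - 3)%N; lia.
rewrite hm in IH hn *.
have [v hv] := IH m ltac:(lia) (r - 1)%N (s - 1)%N (t - 1)%N ltac:(lia) ltac:(lia) ltac:(lia).
exists (tens w3 v); have := tens_hw w3_hw hv.
by rewrite (_ : (1 + (s - 1) = s)%N) 1?(_ : (1 + (t - 1) = t)%N) //; lia.
Qed.

Lemma ncoord_sum d (z : X d) : (ncoord 0 z + ncoord 1 z + ncoord 2 z)%N = d.
Proof.
rewrite !ncoordE -!big_split /=.
rewrite -[RHS](card_ord d) -sum1_card; apply: eq_bigr => i _.
by case: (z i) => [[|[|[|?]]] ?].
Qed.

Unset Implicit Arguments.
Theorem lemma4p4 (d : nat) (hd : (1 <= d)%N) :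
  (forall r s t : nat, (r + s + t)%N = d -> (t <= s)%N -> (s <= r)%N ->
     exists v : V d, v != 0 /\ inEstarV s t v /\ L1 v = 0 /\ L2 v = 0)
  /\
  (forall (s t : nat) (v : V d), v != 0 -> inEstarV s t v -> L1 v = 0 -> L2 v = 0 ->
     [/\ (s + t <= d)%N, (s <= d - s - t)%N & (t <= s)%N]).
Proof.
split.
  move=> r s t hn ts sr; have [v [nz sup l1 l2]] := exist_hw hn ts sr.
  exists v; split=> //; split=> //.
  apply/ffunP => z; rewrite ffunE.
  case: ifP => // /negbT H; apply/esym/eqP; apply: contraNT H => /sup [-> ->].
  by rewrite !eqxx.
move=> s t v nz hE l1 l2.
have sup : forall z, v z != 0 -> ncoord 1 z = s /\ ncoord 2 z = t.
  move=> z; rewrite -hE ffunE; case: ifP => [/andP [/eqP -> /eqP ->] //|].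
  by rewrite eqxx.
have [z0 hz0] := exists_nz nz.
have [e1 e2] := sup _ hz0.
have hst : (s + t <= d)%N by rewrite -(ncoord_sum z0) e1 e2; lia.
have sup0 : forall z, v z != 0 -> ncoord 0 z = (d - s - t)%N.
  move=> z /sup [a1 a2]; have := ncoord_sum z; rewrite a1 a2; lia.
split=> //.
- apply: (@conv_part d (inord 1) (inord 0) _ v s (d - s - t)) => //.
  + by rewrite -val_eqE /= !inordK.
  + by move=> z hz; rewrite !inordK //; split; [case: (sup z hz) | apply: sup0].
- apply: (@conv_part d (inord 2) (inord 1) _ v t s) => //.
  + by rewrite -val_eqE /= !inordK.
  + by move=> z hz; rewrite !inordK //; case: (sup z hz).
Qed.
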